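(* Let $Z$ be a domain, $\pi$ a probability distribution on $Z$, $0\le a\le b$, $\mathcal{F}$ a family of functions from $Z$ to $[a,b]$, $p\in(0,1)$ and $n\ge1$. The function $g:Z^n\to\mathbb{R}$, $g(X_1,\dots,X_n)=\mathsf{r}\mathsf{R}(\mathcal{F},\{X_1,\dots,X_n\},p)$, satisfies the bounded difference inequality with constants $c_i=\frac{|b-a|}{np}$, $1\le i\le n$.
   Context: For $\sigma_1,\dots,\sigma_n$ independent Rademacher random variables (each $\pm1$ with probability $1/2$), $\mathsf{r}\mathsf{R}(\mathcal{F},\{X_1,\dots,X_n\},p)=\mathbb{E}_\sigma\left[\sup_{f\in\mathcal{F}}\frac{1}{n\max\{p,\mathbb{E}_\pi[f]\}}\sum_{i=1}^n\sigma_if(X_i)\right]$, expectation over the $\sigma_i$ only. A function $g:\mathcal{X}^n\to\mathbb{R}$ satisfies the bounded difference inequality with nonnegative constants $c_1,\dots,c_n$ if for every $i$, $\sup_{x_1,\dots,x_n,x_i'\in\mathcal{X}}|g(x_1,\dots,x_n)-g(x_1,\dots,x_{i-1},x_i',x_{i+1},\dots,x_n)|\le c_i$. *)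

(* Defs.v *)
From HB Require Import structures.
From mathcomp Require Import all_boot all_order all_algebra.
From mathcomp Require Import all_classical all_reals all_analysis.
Set Implicit Arguments. Unset Strict Implicit. Unset Printing Implicit Defensive.
Import Order.TTheory GRing.Theory Num.Theory.
Local Open Scope classical_set_scope.
Local Open Scope ring_scope.

Definition rad_sign {R : realType} (b : bool) : R := if b then -1 else 1.

(* Normalized (relative) Rademacher complexity rR(F, {x_1..x_n}, p):
   the expectation over n i.i.d. Rademacher signs is the uniform average
   over all sign vectors s : 'I_n -> bool. *)
Definition rR {d} {T : measurableType d} {R : realType} (P : probability T R)
  (F : set (T -> R)) (n : nat) (x : 'I_n -> T) (p : R) : R :=
  (2%:R ^- n) * \sum_(s : {ffun 'I_n -> bool})
     sup [set ((n%:R * Num.max p (fine 'E_P[f]))^-1 *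
               \sum_(i < n) rad_sign (s i) * f (x i)) | f in F].

Definition replace_at {T : Type} {n : nat} (x : 'I_n -> T) (i : 'I_n) (z : T)
  : 'I_n -> T := fun j => if j == i then z else x j.

Definition bounded_difference {T : Type} {R : realType} {n : nat}
  (g : ('I_n -> T) -> R) (c : 'I_n -> R) : Prop :=
  forall (i : 'I_n) (x : 'I_n -> T) (z : T), `|g x - g (replace_at x i z)| <= c i.

(* Main.v *)
Require Import Defs.
From HB Require Import structures.
From mathcomp Require Import all_boot all_order all_algebra.
From mathcomp Require Import all_classical all_reals all_analysis.
From mathcomp Require Import lra.
Import Order.TTheory GRing.Theory Num.Theory.
Local Open Scope classical_set_scope.
Local Open Scope ring_scope.

Lemma sup_diff (R : realType) (U : Type) (S : set U) (g h : U -> R) (c B : R) :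
  0 <= c -> (forall f, S f -> `|g f - h f| <= c) ->
  (forall f, S f -> g f <= B) -> (forall f, S f -> h f <= B) ->
  `|sup (g @` S) - sup (h @` S)| <= c.
Proof.
move=> c0 Hd Hg Hh.
have [->|/set0P [f0 Sf0]] := eqVneq S set0.
  by rewrite !image_set0 subrr normr0.
have hubG : has_ubound (g @` S) by exists B => _ [f Sf <-]; exact: Hg.
have hubH : has_ubound (h @` S) by exists B => _ [f Sf <-]; exact: Hh.
have neG : g @` S !=set0 by exists (g f0), f0.
have neH : h @` S !=set0 by exists (h f0), f0.
have e1 : sup (g @` S) <= sup (h @` S) + c.
  apply: ge_sup => // _ [f Sf <-].
  apply: (@le_trans _ _ (h f + c)).
    have := Hd f Sf; rewrite ler_norml => /andP[_ H1]; lra.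
  rewrite lerD2r; apply: ub_le_sup => //; by exists f.
have e2 : sup (h @` S) <= sup (g @` S) + c.
  apply: ge_sup => // _ [f Sf <-].
  apply: (@le_trans _ _ (g f + c)).
    have := Hd f Sf; rewrite ler_norml => /andP[H1 _]; lra.
  rewrite lerD2r; apply: ub_le_sup => //; by exists f.
rewrite ler_norml; apply/andP; split; lra.
Qed.

Lemma rad_norm (R : realType) (b : bool) (y : R) : `|rad_sign b * y| = `|y|.
Proof. by case: b; rewrite /rad_sign ?mulN1r ?mul1r ?normrN. Qed.

Theorem lemma6 (d : measure_display) (T : measurableType d) (R : realType)
  (P : probability T R) (a b : R) (F : set (T -> R)) (p : R) (n : nat) :
  0 <= a -> a <= b ->
  (forall f, F f -> measurable_fun setT f) ->
  (forall f, F f -> forall z, a <= f z <= b) ->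
  0 < p < 1 -> (1 <= n)%N ->
  bounded_difference (fun x : 'I_n -> T => rR P F x p)
                     (fun _ => `|b - a| / (n%:R * p)).
Proof.
move=> a0 ab _ Fab /andP[p0 p1] n1 i x z.
set c := `|b - a| / (n%:R * p).
have n0 : 0 < n%:R :> R by rewrite ltr0n.
have np0 : 0 < n%:R * p by rewrite mulr_gt0.
have c0 : 0 <= c by rewrite divr_ge0 // ltW.
set k := fun f : T -> R => (n%:R * Num.max p (fine 'E_P[f]))^-1.
have kle : forall f, 0 < k f /\ k f <= (n%:R * p)^-1.
  move=> f; have hm : p <= Num.max p (fine 'E_P[f]) by rewrite le_max lexx.
  have hm0 : 0 < Num.max p (fine 'E_P[f]) by apply: lt_le_trans hm.
  split; first by rewrite invr_gt0 mulr_gt0.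
  by rewrite lef_pV2 ?posrE ?mulr_gt0 // ler_pM2l.
set B := (n%:R * p)^-1 * (n%:R * b).
have elemB : forall (s : {ffun 'I_n -> bool}) (y : 'I_n -> T) f, F f ->
    k f * \sum_(j < n) rad_sign (s j) * f (y j) <= B.
  move=> s y f Ff; have [k0 kl] := kle f.
  apply: (le_trans (ler_norm _)); rewrite normrM (gtr0_norm k0).
  apply: ler_pM => //; first exact: ltW.
  apply: (le_trans (ler_norm_sum _ _ _)).
  have -> : n%:R * b = \sum_(j < n) b by rewrite sumr_const card_ord mulr_natl.
  apply: ler_sum => j _; rewrite rad_norm.
  have /andP[h1 h2] := Fab f Ff (y j).
  by rewrite ger0_norm //; apply: le_trans h1.
rewrite /rR -mulrBr -sumrB normrM ger0_norm; last by rewrite ?invr_ge0 exprn_ge0.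
apply: (@le_trans _ _ (2%:R ^- n * \sum_(s : {ffun 'I_n -> bool}) c)).
  apply: ler_pM => //.
  apply: (le_trans (ler_norm_sum _ _ _)); apply: ler_sum => s _.
  apply: (@sup_diff _ _ F (fun f => k f * \sum_(j < n) rad_sign (s j) * f (x j))
     (fun f => k f * \sum_(j < n) rad_sign (s j) * f (replace_at x i z j)) c B c0).
  - move=> f Ff; have [k0 kl] := kle f.
    rewrite -mulrBr -sumrB normrM (gtr0_norm k0).
    rewrite (bigD1 i) //= big1; last first.
      by move=> j /negbTE ji; rewrite /replace_at ji subrr.
    rewrite addr0 /replace_at eqxx -mulrBr rad_norm /c mulrC.
    apply: ler_pM => //; first exact: ltW.
    have /andP[h1 h2] := Fab f Ff (x i); have /andP[h3 h4] := Fab f Ff z.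
    rewrite ler_norml (@ger0_norm _ (b - a)) ?subr_ge0 //; apply/andP; split; lra.
  - by move=> f Ff; apply: elemB.
  - by move=> f Ff; apply: elemB.
rewrite sumr_const.
rewrite [X in c *+ X]card_ffun [X in c *+ (X ^ _)]card_bool card_ord.
rewrite -[c *+ _]mulr_natl natrX mulrA mulVf ?mul1r //.
Qed.
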